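(* Consider the event-triggered distributed estimator described in the context, and suppose: (i) the communication graph is connected, i.e. $\lambda_2(\mathcal{L})>0$; (ii) $G=\sum_{i=1}^N H_i^TH_i$ is full rank; (iii) the step sizes are $\alpha(t)=\frac{a}{(t+1)^{\tau_1}}$ and $\beta(t)=\frac{b}{(t+1)^{\tau_2}}$ with $a,b>0$, $0<\tau_2\le\tau_1\le 1$, and $\tau_1>\max\{\tau_2+\frac{1}{2+\epsilon_1},0.5\}$, where $\epsilon_1>0$ is such that $\mathbb{E}\{\|V(t)\|^{2+\epsilon_1}\}<\infty$. Let $\rho_0=\min_{j\in\mathcal{V}}\rho_j$. If $\rho_0>\tau_1-\tau_2$, then for every agent $i\in\mathcal{V}$ the estimate sequence is asymptotically unbiased: $\lim_{t\to\infty}\mathbb{E}\{x_i(t)\}=\theta$.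
   Context: An unknown parameter $\theta\in\mathbb{R}^n$ is observed by $N$ agents $\mathcal{V}=\{1,\dots,N\}$ via $y_i(t)=H_i\theta+v_i(t)$, $t=0,1,2,\dots$, where $H_i\in\mathbb{R}^{m_i\times n}$ is known and the noise $v_i(t)\in\mathbb{R}^{m_i}$ is zero mean with covariance $R_i$. The stacked noise $V(t)=[v_1(t)^T,\dots,v_N(t)^T]^T$ is i.i.d. over time (noises of different agents at the same time may be correlated). Agents communicate over an undirected graph without self-loops with adjacency matrix $\mathcal{A}=[a_{ij}]\in\{0,1\}^{N\times N}$, neighbor sets $\mathcal{N}_i=\{j: a_{ij}=1\}$, degree matrix $\mathcal{D}$ and Laplacian $\mathcal{L}=\mathcal{D}-\mathcal{A}$. Each agent $i$ has a threshold exponent $\rho_i>0$. Agent $i$ keeps an estimate $x_i(t)\in\mathbb{R}^n$ (arbitrary deterministic initial value $x_i(0)$, which is the first transmitted value). Let $t_k^i$ be the latest triggering (transmission) time of agent $i$. At time $t$, agent $i$ triggers (broadcasts $x_i(t)$ to its neighbors, which then becomes its latest transmitted value) iff $\|x_i(t)-x_i(t_k^i)\|>\frac{1}{(t+1)^{\rho_i}}$. Denoting by $x_j(t_k^j)$ the latest value transmitted by agent $j$ up to and including time $t$, the estimator is $x_i(t+1)=x_i(t)+\alpha(t)H_i^T\big(y_i(t)-H_ix_i(t)\big)+\beta(t)\sum_{j\in\mathcal{N}_i}\big(x_j(t_k^j)-x_i(t)\big)$. *)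

(* Defs.v *)
From HB Require Import structures.
From mathcomp Require Import all_boot all_order all_algebra.
From mathcomp Require Import all_classical all_reals all_analysis.
Set Implicit Arguments. Unset Strict Implicit. Unset Printing Implicit Defensive.
Import Order.TTheory GRing.Theory Num.Theory.
Import numFieldNormedType.Exports.
Local Open Scope classical_set_scope.
Local Open Scope ring_scope.

Definition enorm (R : realType) (k : nat) (x : 'cV[R]_k) : R :=
  Num.sqrt (\sum_(j < k) x j 0 ^+ 2).

Definition stacked_norm (R : realType) (N : nat) (m : 'I_N -> nat)
  (v : forall i : 'I_N, 'cV[R]_(m i)) : R :=
  Num.sqrt (\sum_(i < N) \sum_(k < m i) v i k 0 ^+ 2).

Definition step_size (R : realType) (c tau : R) (t : nat) : R :=
  c / ((t.+1)%:R `^ tau).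

(* Pathwise event-triggered estimator: given a noise realisation v,
   et_est ... t = (x(t), xhat(t)), where xhat_i(t) is the latest value
   transmitted by agent i up to and including time t. *)
Fixpoint et_est (R : realType) (N n : nat) (m : 'I_N -> nat)
  (H : forall i : 'I_N, 'M[R]_(m i, n)) (adj : rel 'I_N) (rho : 'I_N -> R)
  (alpha beta : nat -> R) (theta : 'cV[R]_n) (x0 : 'I_N -> 'cV[R]_n)
  (v : nat -> forall i : 'I_N, 'cV[R]_(m i)) (t : nat)
  : ('I_N -> 'cV[R]_n) * ('I_N -> 'cV[R]_n) :=
  match t with
  | 0 => (x0, x0)
  | s.+1 =>
    let: (x, xh) := et_est H adj rho alpha beta theta x0 v s in
    let x' := fun i : 'I_N =>
      x i + alpha s *: ((H i)^T *m ((H i *m theta + v s i) - H i *m x i))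
          + beta s *: \sum_(j < N | adj i j) (xh j - x i) in
    let xh' := fun i : 'I_N =>
      if 1 / ((s.+2)%:R `^ rho i) < enorm (x' i - xh i) then x' i else xh i in
    (x', xh')
  end.

Definition rect_event (T R : Type) (N : nat) (m : 'I_N -> nat)
  (V : T -> forall i : 'I_N, 'cV[R]_(m i))
  (B : forall i : 'I_N, 'I_(m i) -> set R) : set T :=
  [set w | forall (i : 'I_N) (k : 'I_(m i)), B i k (V w i k 0)].

(* mutual independence of the random vectors V(t), t in nat
   (product rule on every finite family of measurable rectangles,
   which generate sigma(V(t))) *)
Definition mutually_independent_vecs (R : realType) (d : measure_display)
  (T : measurableType d) (P : probability T R) (N : nat) (m : 'I_N -> nat)
  (V : nat -> T -> forall i : 'I_N, 'cV[R]_(m i)) : Prop :=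
  forall (s : seq nat) (B : nat -> forall i : 'I_N, 'I_(m i) -> set R),
    uniq s ->
    (forall t i k, measurable (B t i k)) ->
    P [set w | forall t, t \in s -> rect_event (V t) (B t) w] =
    (\prod_(t <- s) P (rect_event (V t) (B t)))%E.

Definition identically_distributed_vecs (R : realType) (d : measure_display)
  (T : measurableType d) (P : probability T R) (N : nat) (m : 'I_N -> nat)
  (V : nat -> T -> forall i : 'I_N, 'cV[R]_(m i)) : Prop :=
  forall (t : nat) (B : forall i : 'I_N, 'I_(m i) -> set R),
    (forall i k, measurable (B i k)) ->
    P (rect_event (V t) B) = P (rect_event (V 0%N) B).

(* Main.v *)
Require Import Defs.
From HB Require Import structures.
From mathcomp Require Import all_boot all_order all_algebra.
From mathcomp Require Import all_classical all_reals all_analysis.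
From mathcomp Require Import measurable_realfun.
From mathcomp.algebra_tactics Require Import ring lra.
Import Order.TTheory GRing.Theory Num.Theory.
Import numFieldNormedType.Exports.
Set Implicit Arguments. Unset Strict Implicit. Unset Printing Implicit Defensive.
Local Open Scope classical_set_scope.
Local Open Scope ring_scope.

Section Alg.
Variable R : realType.

Lemma sqr_sum_le_all (I : finType) (y : I -> R) :
  (\sum_i y i) ^+ 2 <= #|I|%:R * \sum_i y i ^+ 2.
Proof.
have e1 : (\sum_i y i) ^+ 2 = \sum_i \sum_j y i * y j.
  by rewrite expr2 mulr_suml; apply: eq_bigr => i _; rewrite mulr_sumr.
have e2 : \sum_i \sum_(j : I) (y i ^+ 2 + y j ^+ 2) = (#|I|%:R * \sum_i y i ^+ 2) *+ 2.
  rewrite (eq_bigr (fun i => y i ^+ 2 *+ #|I| + \sum_(j : I) y j ^+ 2)); last first.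
    by move=> i _; rewrite big_split /= sumr_const.
  rewrite big_split /= sumr_const -sumrMnl mulr_natl mulr2n; congr (_ + _).
  all: try by rewrite -sumrMnl.
have e3 : (\sum_i \sum_j y i * y j) *+ 2 <= \sum_i \sum_(j : I) (y i ^+ 2 + y j ^+ 2).
  rewrite -sumrMnl; apply: ler_sum => i _; rewrite -sumrMnl; apply: ler_sum => j _.
  have := sqr_ge0 (y i - y j); rewrite mulr2n; nra.
rewrite e1; move: e3; rewrite e2; rewrite !mulr2n; lra.
Qed.

Lemma sqr_sum_le (I : finType) (P : pred I) (x : I -> R) :
  (\sum_(i | P i) x i) ^+ 2 <= #|I|%:R * \sum_(i | P i) x i ^+ 2.
Proof.
rewrite big_mkcond (big_mkcond P).
have -> : \sum_i (if P i then x i ^+ 2 else 0) = \sum_i (if P i then x i else 0) ^+ 2.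
  by apply: eq_bigr => i _; case: (P i); rewrite ?expr0n.
exact: sqr_sum_le_all.
Qed.

Definition ip n (u v : 'cV[R]_n) : R := \sum_k u k 0 * v k 0.
Arguments ip {n}.

Lemma ip_mx n (u v : 'cV[R]_n) : ip u v = (u^T *m v) 0 0.
Proof. by rewrite mxE; apply: eq_bigr => k _; rewrite mxE. Qed.

Lemma ip_ge0 n (u : 'cV[R]_n) : 0 <= ip u u.
Proof. by apply: sumr_ge0 => k _; rewrite -expr2 sqr_ge0. Qed.

Lemma ipC n (u v : 'cV[R]_n) : ip u v = ip v u.
Proof. by apply: eq_bigr => k _; rewrite mulrC. Qed.

Lemma ipDl n (u v w : 'cV[R]_n) : ip (u + v) w = ip u w + ip v w.
Proof. by rewrite /ip -big_split; apply: eq_bigr => k _; rewrite mxE mulrDl. Qed.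

Lemma ipDr n (u v w : 'cV[R]_n) : ip w (u + v) = ip w u + ip w v.
Proof. by rewrite ipC ipDl !(ipC w). Qed.

Lemma ipZl n c (u v : 'cV[R]_n) : ip (c *: u) v = c * ip u v.
Proof. by rewrite /ip mulr_sumr; apply: eq_bigr => k _; rewrite mxE mulrA. Qed.

Lemma ipZr n c (u v : 'cV[R]_n) : ip v (c *: u) = c * ip v u.
Proof. by rewrite ipC ipZl ipC. Qed.

Lemma ipNl n (u v : 'cV[R]_n) : ip (- u) v = - ip u v.
Proof. by rewrite -scaleN1r ipZl mulN1r. Qed.

Lemma ipNr n (u v : 'cV[R]_n) : ip v (- u) = - ip v u.
Proof. by rewrite ipC ipNl ipC. Qed.

Lemma ipBl n (u v w : 'cV[R]_n) : ip (u - v) w = ip u w - ip v w.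
Proof. by rewrite ipDl ipNl. Qed.

Lemma ipBr n (u v w : 'cV[R]_n) : ip w (u - v) = ip w u - ip w v.
Proof. by rewrite ipDr ipNr. Qed.

Lemma ip_suml n (I : finType) (P : pred I) (u : I -> 'cV[R]_n) v :
  ip (\sum_(i | P i) u i) v = \sum_(i | P i) ip (u i) v.
Proof.
rewrite /ip (exchange_big _ _ _ _ _ _ ) /=; apply: eq_bigr => k _.
by rewrite summxE mulr_suml.
Qed.

Lemma ip_trmx p q (M : 'M[R]_(p, q)) u v : ip u (M *m v) = ip (M^T *m u) v.
Proof. by rewrite !ip_mx trmx_mul trmxK mulmxA. Qed.

Lemma ip_comp_le n (u : 'cV[R]_n) k : u k 0 ^+ 2 <= ip u u.
Proof.
rewrite /ip (bigD1 k) //= -expr2 lerDl; apply: sumr_ge0 => l _.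
by rewrite -expr2 sqr_ge0.
Qed.

Lemma ip_sum_le n (I : finType) (P : pred I) (u : I -> 'cV[R]_n) :
  ip (\sum_(i | P i) u i) (\sum_(i | P i) u i) <= #|I|%:R * \sum_(i | P i) ip (u i) (u i).
Proof.
rewrite /ip [X in _ <= _ * X]exchange_big /= mulr_sumr; apply: ler_sum => k _.
rewrite summxE -expr2 (le_trans (sqr_sum_le _ _)) // ler_wpM2l //.
Qed.

Lemma ip_mul_le p q (M : 'M[R]_(p, q)) (u : 'cV[R]_q) :
  ip (M *m u) (M *m u) <= (q%:R * \sum_k \sum_l M k l ^+ 2) * ip u u.
Proof.
apply: (@le_trans _ _ (\sum_k (q%:R * \sum_l M k l ^+ 2) * ip u u)); last first.
  by rewrite -mulr_suml -mulr_sumr.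
apply: ler_sum => k _; rewrite -expr2 mxE.
apply: (le_trans (sqr_sum_le _ _)); rewrite card_ord -mulrA ler_wpM2l //.
rewrite mulr_suml; apply: ler_sum => l _.
by rewrite exprMn ler_wpM2l ?sqr_ge0 // ip_comp_le.
Qed.

Lemma ip_add_le n (u v : 'cV[R]_n) (eta : R) : 0 < eta ->
  ip (u + v) (u + v) <= (1 + eta) * ip u u + (1 + eta^-1) * ip v v.
Proof.
move=> e0; have := ip_ge0 (eta *: u - v).
rewrite !(ipDl, ipDr, ipNl, ipNr, ipZl, ipZr) (ipC v u).
have ie : eta * eta^-1 = 1 by rewrite divff // gt_eqF.
have := ip_ge0 u; have := ip_ge0 v; nra.
Qed.

End Alg.

Lemma le_sum_term (R : realType) (I : finType) (P : pred I) (F : I -> R) j :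
  P j -> (forall i, P i -> 0 <= F i) -> F j <= \sum_(i | P i) F i.
Proof.
move=> Pj F0; rewrite (bigD1 j) //= lerDl; apply: sumr_ge0 => i /andP[Pi _].
exact: F0.
Qed.

Section Net.
Variables (R : realType) (N n : nat) (m : 'I_N -> nat).
Variable H : forall i : 'I_N, 'M[R]_(m i, n).
Variable adj : rel 'I_N.
Hypothesis adj_sym : forall i j, adj i j = adj j i.

Definition W (z : 'I_N -> 'cV[R]_n) := \sum_i ip (z i) (z i).
Definition Lz (z : 'I_N -> 'cV[R]_n) i := \sum_(j | adj i j) (z i - z j).
Definition Az (z : 'I_N -> 'cV[R]_n) i := (H i)^T *m (H i *m z i).
Definition QA (z : 'I_N -> 'cV[R]_n) := \sum_i ip (H i *m z i) (H i *m z i).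
Definition Dz (z : 'I_N -> 'cV[R]_n) :=
  \sum_i \sum_(j | adj i j) ip (z i - z j) (z i - z j).
Definition cT i := ((m i)%:R * \sum_k \sum_l ((H i)^T k l) ^+ 2 : R).
Definition CA := \sum_i cT i.
Definition cH i := (n%:R * \sum_k \sum_l (H i k l) ^+ 2 : R).
Definition CH := \sum_i cH i.

Lemma cT_ge0 i : 0 <= cT i.
Proof. by apply: mulr_ge0 => //; do 2 (apply: sumr_ge0 => ? _); exact: sqr_ge0. Qed.
Lemma cH_ge0 i : 0 <= cH i.
Proof. by apply: mulr_ge0 => //; do 2 (apply: sumr_ge0 => ? _); exact: sqr_ge0. Qed.
Lemma CA_ge0 : 0 <= CA. Proof. by apply: sumr_ge0 => i _; exact: cT_ge0. Qed.
Lemma CH_ge0 : 0 <= CH. Proof. by apply: sumr_ge0 => i _; exact: cH_ge0. Qed.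
Lemma cT_le i : cT i <= CA.
Proof. by apply: le_sum_term => // j _; exact: cT_ge0. Qed.
Lemma cH_le i : cH i <= CH.
Proof. by apply: le_sum_term => // j _; exact: cH_ge0. Qed.

Lemma W_ge0 z : 0 <= W z. Proof. by apply: sumr_ge0 => i _; exact: ip_ge0. Qed.
Lemma QA_ge0 z : 0 <= QA z. Proof. by apply: sumr_ge0 => i _; exact: ip_ge0. Qed.
Lemma Dz_ge0 z : 0 <= Dz z.
Proof. by apply: sumr_ge0 => i _; apply: sumr_ge0 => j _; exact: ip_ge0. Qed.

Lemma ipAz z : \sum_i ip (z i) (Az z i) = QA z.
Proof. by apply: eq_bigr => i _; rewrite /Az ip_trmx trmxK. Qed.

Lemma swap_adj (F : 'I_N -> 'I_N -> R) :
  \sum_i \sum_(j | adj i j) F i j = \sum_i \sum_(j | adj i j) F j i.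
Proof.
rewrite (exchange_big_dep xpredT) //=; apply: eq_bigr => i _.
by apply: eq_bigl => j; rewrite adj_sym.
Qed.

Lemma ipLz z : (\sum_i ip (z i) (Lz z i)) *+ 2 = Dz z.
Proof.
have e : \sum_i ip (z i) (Lz z i) = \sum_i \sum_(j | adj i j) ip (z i) (z i - z j).
  by apply: eq_bigr => i _; rewrite /Lz ipC ip_suml; apply: eq_bigr => j _; rewrite ipC.
rewrite mulr2n e {2}swap_adj -big_split /=; apply: eq_bigr => i _.
rewrite -big_split /=; apply: eq_bigr => j _.
by rewrite !(ipBl, ipBr) (ipC (z j) (z i)); ring.
Qed.

Lemma W_Lz z : W (Lz z) <= N%:R * Dz z.
Proof.
rewrite /W /Dz mulr_sumr; apply: ler_sum => i _.
by rewrite /Lz (le_trans (ip_sum_le _ _)) // card_ord.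
Qed.

Lemma W_Az z : W (Az z) <= CA * QA z.
Proof.
rewrite /W /QA mulr_sumr; apply: ler_sum => i _.
rewrite /Az (le_trans (ip_mul_le _ _)) // -/(cT i) ler_wpM2r ?ip_ge0 //.
exact: cT_le.
Qed.


Lemma ip0 p : ip (0 : 'cV[R]_p) 0 = 0.
Proof. by rewrite /ip big1 // => k _; rewrite mxE mul0r. Qed.

Lemma ip2_le p (u v : 'cV[R]_p) : ip (u + v) (u + v) <= 2 * ip u u + 2 * ip v v.
Proof.
have := ip_add_le u v (ltr01 : (0:R) < 1); rewrite invr1.
by have -> : (1 + 1 : R) = 2 by [].
Qed.

Lemma step_ineq c lam (al be : R) z :
  (forall z, lam * W z <= QA z + c * Dz z) -> 0 <= c -> 0 <= al -> 0 <= be ->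
  al * CA <= 1/2 -> be * N%:R <= 1/4 -> 2 * c * al <= be ->
  W (fun i => z i - al *: Az z i - be *: Lz z i) <= (1 - al * lam) * W z.
Proof.
move=> hpos c0 a0 b0 haC hbN hcab.
pose p := fun i => al *: Az z i + be *: Lz z i.
have pt : forall i, ip (z i - al *: Az z i - be *: Lz z i) (z i - al *: Az z i - be *: Lz z i)
   = ip (z i) (z i) - 2 * (al * ip (z i) (Az z i)) - 2 * (be * ip (z i) (Lz z i)) + ip (p i) (p i).
  move=> i; rewrite /p !(ipDl, ipDr, ipNl, ipNr, ipZl, ipZr).
  rewrite (ipC (Az z i) (z i)) (ipC (Lz z i) (z i)) (ipC (Lz z i) (Az z i)); ring.
have ey : W (fun i => z i - al *: Az z i - be *: Lz z i) =
    W z - 2 * (al * \sum_i ip (z i) (Az z i)) - 2 * (be * \sum_i ip (z i) (Lz z i)) + W p.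
  rewrite /W (eq_bigr _ (fun i _ => pt i)) big_split /= !sumrB.
  by rewrite -!mulr_sumr.
have hp : W p <= 2 * (al ^+ 2 * W (Az z)) + 2 * (be ^+ 2 * W (Lz z)).
  rewrite /W !mulr_sumr -big_split /=; apply: ler_sum => i _.
  by rewrite /p (le_trans (ip2_le _ _)) // !ipZl !ipZr !expr2 !mulrA.
have hA := W_Az z; have hL := W_Lz z.
have hS := ipLz z; rewrite ipAz in ey.
have hpz := hpos z.
have Q0 := QA_ge0 z; have D0 := Dz_ge0 z; have W0 := W_ge0 z.
set Q := QA z in ey hA hpz Q0 *; set D := Dz z in hS hL hpz D0 *.
set S := \sum_i ip (z i) (Lz z i) in ey hS.
set WA := W (Az z) in hp hA; set WL := W (Lz z) in hp hL.
rewrite mulr2n in hS.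
have h1 : al ^+ 2 * WA <= al * (1/2) * Q.
  apply: (le_trans (ler_wpM2l (sqr_ge0 al) hA)).
  have e : al ^+ 2 * (CA * Q) = al * CA * (al * Q) by ring.
  rewrite e (le_trans (ler_wpM2r (mulr_ge0 a0 Q0) haC)) //.
  by rewrite le_eqVlt; apply/orP; left; apply/eqP; ring.
have h2 : be ^+ 2 * WL <= be * (1/4) * D.
  apply: (le_trans (ler_wpM2l (sqr_ge0 be) hL)).
  have e : be ^+ 2 * (N%:R * D) = be * N%:R * (be * D) by ring.
  rewrite e (le_trans (ler_wpM2r (mulr_ge0 b0 D0) hbN)) //.
  by rewrite le_eqVlt; apply/orP; left; apply/eqP; ring.
have h3 : 2 * c * al * D <= be * D by exact: ler_wpM2r.
have h4 : al * (lam * W z) <= al * (Q + c * D) by exact: ler_wpM2l.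
have hS2 : 2 * (be * S) = be * D by rewrite -hS; ring.
rewrite ey; lra.
Qed.


Lemma ip_opp_sub p (u v : 'cV[R]_p) : ip (u - v) (u - v) = ip (v - u) (v - u).
Proof. by rewrite -opprB ipNl ipNr opprK. Qed.

Lemma edge_le z x y : adj x y -> ip (z y - z x) (z y - z x) <= Dz z.
Proof.
move=> axy; rewrite /Dz.
have h1 : ip (z y - z x) (z y - z x) <= \sum_(j | adj y j) ip (z y - z j) (z y - z j).
  apply: (@le_sum_term _ _ (adj y) (fun j => ip (z y - z j) (z y - z j))).
    by rewrite adj_sym.
  by move=> j _; exact: ip_ge0.
apply: (le_trans h1).
apply: (@le_sum_term _ _ xpredT (fun i => \sum_(j | adj i j) ip (z i - z j) (z i - z j))) => //.
by move=> i _; apply: sumr_ge0 => j _; exact: ip_ge0.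
Qed.

Lemma path_bound x p : path adj x p ->
  exists2 K, 0 <= K & forall z, ip (z (last x p) - z x) (z (last x p) - z x) <= K * Dz z.
Proof.
elim: p x => [|y p IH] x /=.
  by move=> _; exists 0 => // z; rewrite subrr ip0 mul0r.
move=> /andP[axy py]; have [K K0 hK] := IH y py.
exists (2 * K + 2); first by lra.
move=> z; have -> : z (last y p) - z x = (z (last y p) - z y) + (z y - z x).
  by rewrite addrA subrK.
apply: (le_trans (ip2_le _ _)).
have := hK z; have := edge_le z axy; have := Dz_ge0 z; nra.
Qed.

Hypothesis conn : forall i j, connect adj i j.
Hypothesis rk : \rank ((\sum_(i < N) (H i)^T *m H i)%R) = n.

Lemma Gbound : exists2 K0, 0 <= K0 &
  forall x : 'cV[R]_n, ip x x <= K0 * \sum_i ip (H i *m x) (H i *m x).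
Proof.
set G := \sum_i (H i)^T *m H i.
have Gu : G \in unitmx by rewrite -row_free_unit /row_free /G; apply/eqP; exact: rk.
set Gi := invmx G.
pose cG := (n%:R * \sum_k \sum_l (Gi k l) ^+ 2 : R).
have cG0 : 0 <= cG.
  by apply: mulr_ge0 => //; do 2 (apply: sumr_ge0 => ? _); exact: sqr_ge0.
exists (cG * (N%:R * CA)); first by apply: mulr_ge0 => //; apply: mulr_ge0 => //; exact: CA_ge0.
move=> x.
have ex : x = Gi *m (G *m x) by rewrite mulmxA mulVmx // mul1mx.
have eG : G *m x = \sum_i (H i)^T *m (H i *m x).
  by rewrite /G mulmx_suml; apply: eq_bigr => i _; rewrite mulmxA.
have h1 : ip x x <= cG * ip (G *m x) (G *m x) by rewrite {1 2}ex; exact: ip_mul_le.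
have h2 : ip (G *m x) (G *m x) <= N%:R * \sum_i ip ((H i)^T *m (H i *m x)) ((H i)^T *m (H i *m x)).
  by rewrite eG (le_trans (ip_sum_le _ _)) // card_ord.
have h3 : \sum_i ip ((H i)^T *m (H i *m x)) ((H i)^T *m (H i *m x)) <=
          CA * \sum_i ip (H i *m x) (H i *m x).
  rewrite mulr_sumr; apply: ler_sum => i _.
  apply: (le_trans (ip_mul_le _ _)); rewrite -/(cT i) ler_wpM2r ?ip_ge0 //; exact: cT_le.
have s0 : 0 <= \sum_i ip (H i *m x) (H i *m x) by apply: sumr_ge0 => i _; exact: ip_ge0.
have s1 : 0 <= \sum_i ip ((H i)^T *m (H i *m x)) ((H i)^T *m (H i *m x)).
  by apply: sumr_ge0 => i _; exact: ip_ge0.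
apply: (le_trans h1); rewrite -[X in _ <= X]mulrA; apply: ler_wpM2l => //.
apply: (le_trans h2); rewrite -[X in _ <= X]mulrA; apply: ler_wpM2l => //.
Qed.

Lemma pos_lemma c : 0 < c -> exists2 lam, 0 < lam &
  forall z, lam * W z <= QA z + c * Dz z.
Proof.
move=> c0.
case: (pickP (@predT 'I_N)) => [r _ | none]; last first.
  exists 1 => // z; rewrite /W big1 ?mulr0; last by move=> i; have := none i.
  by apply: addr_ge0; [exact: QA_ge0 | apply: mulr_ge0; [exact: ltW | exact: Dz_ge0]].
have [K0 K00 hK0] := Gbound.
have /choice [K hK] : forall i, exists K, 0 <= K /\
    forall z, ip (z i - z r) (z i - z r) <= K * Dz z.
  move=> i; have /connectP [p pp ->] := conn r i.
  by have [K Kp hK] := path_bound pp; exists K.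
pose Ks := \sum_i K i.
have Ks0 : 0 <= Ks by apply: sumr_ge0 => i _; case: (hK i).
pose A1 := 4 * N%:R * K0.
pose A2 := 4 * N%:R * K0 * CH * Ks + 2 * Ks.
have A10 : 0 <= A1 by rewrite /A1; apply: mulr_ge0 => //; apply: mulr_ge0.
have A20 : 0 <= A2.
  rewrite /A2; apply: addr_ge0; last by apply: mulr_ge0.
  by apply: mulr_ge0 => //; apply: mulr_ge0; [apply: mulr_ge0; [apply: mulr_ge0|] | exact: CH_ge0].
pose B := A2 / c.
have B0 : 0 <= B by apply: divr_ge0 => //; exact: ltW.
have eB : B * c = A2 by rewrite /B divfK // gt_eqF.
pose M := A1 + B + 1.
have M0 : 0 < M by rewrite /M; lra.
exists M^-1; first by rewrite invr_gt0.
move=> z.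
have D0 := Dz_ge0 z; have Q0 := QA_ge0 z.
have hW : W z <= 2 * N%:R * ip (z r) (z r) + 2 * Ks * Dz z.
  rewrite /W.
  apply: (@le_trans _ _ (\sum_i (2 * (K i * Dz z) + 2 * ip (z r) (z r)))).
    apply: ler_sum => i _.
    have -> : z i = (z i - z r) + z r by rewrite subrK.
    apply: (le_trans (ip2_le _ _)); have [_ h] := hK i; have := h z; lra.
  rewrite big_split /= sumr_const card_ord -mulr_natl -mulr_sumr -mulr_suml -/Ks.
  by rewrite le_eqVlt; apply/orP; left; apply/eqP; ring.
have hr : \sum_i ip (H i *m z r) (H i *m z r) <= 2 * QA z + 2 * CH * Ks * Dz z.
  rewrite /QA /Ks.
  apply: (@le_trans _ _ (\sum_i (2 * ip (H i *m z i) (H i *m z i) + 2 * CH * (K i * Dz z)))); last first.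
    by rewrite big_split /= -!mulr_sumr -mulr_suml mulrA.
  apply: ler_sum => i _.
  have -> : H i *m z r = H i *m z i + H i *m (z r - z i) by rewrite -mulmxDr addrC subrK.
  apply: (le_trans (ip2_le _ _)).
  have h1 := ip_mul_le (H i) (z r - z i); rewrite -/(cH i) ip_opp_sub in h1.
  have [Ki0 h] := hK i; have h2 := h z.
  have h3 : cH i * ip (z i - z r) (z i - z r) <= CH * (K i * Dz z).
    apply: (le_trans (ler_wpM2l (cH_ge0 i) h2)); apply: ler_wpM2r; last exact: cH_le.
    exact: mulr_ge0.
  lra.
have hr2 := hK0 (z r).
have hs0 : 0 <= \sum_i ip (H i *m z r) (H i *m z r) by apply: sumr_ge0 => i _; exact: ip_ge0.
have hWb : W z <= A1 * QA z + A2 * Dz z.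
  have h5 : 2 * N%:R * ip (z r) (z r) <= 2 * N%:R * (K0 * (2 * QA z + 2 * CH * Ks * Dz z)).
    apply: ler_wpM2l => //; apply: (le_trans hr2); exact: ler_wpM2l.
  apply: (le_trans hW); rewrite /A1 /A2.
  move: h5; set X := (2 * N%:R * _); move=> h5.
  have e : 2 * N%:R * (K0 * (2 * QA z + 2 * CH * Ks * Dz z)) + 2 * Ks * Dz z =
     4 * N%:R * K0 * QA z + (4 * N%:R * K0 * CH * Ks + 2 * Ks) * Dz z by ring.
  by rewrite -e lerD2r.
have hM : W z <= M * (QA z + c * Dz z).
  apply: (le_trans hWb).
  have e : M * (QA z + c * Dz z) = A1 * QA z + B * c * Dz z + (B * QA z + QA z + A1 * c * Dz z + c * Dz z)
    by rewrite /M; ring.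
  rewrite e eB lerDl.
  have : 0 <= B * QA z by exact: mulr_ge0.
  have : 0 <= A1 * c * Dz z by apply: mulr_ge0 => //; apply: mulr_ge0 => //; exact: ltW.
  have : 0 <= c * Dz z by apply: mulr_ge0 => //; exact: ltW.
  lra.
rewrite -(ler_pM2l M0) mulrA mulfV ?gt_eqF // mul1r.
exact: hM.
Qed.

End Net.

Section Seq.
Variable R : realType.

Lemma seq_conv (u al eps : nat -> R) (c : R) (T0 : nat) :
  0 < c -> (forall t, 0 <= u t) -> (forall t, (T0 <= t)%N -> 0 <= c * al t <= 1) ->
  (forall t, (T0 <= t)%N -> u t.+1 <= (1 - c * al t) * u t + al t * eps t) ->
  (forall e, 0 < e -> exists T, forall t, (T <= t)%N -> eps t <= e) ->
  (forall T (M : R), exists k, M <= \sum_(T <= s < T + k) al s) ->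
  forall e, 0 < e -> exists T, forall t, (T <= t)%N -> u t <= e.
Proof.
move=> c0 u0 hal hrec heps hdiv e e0.
have al0 : forall t, (T0 <= t)%N -> 0 <= al t.
  move=> t /hal /andP[h _]; rewrite -(pmulr_rge0 _ c0); exact: h.
have ce0 : 0 < c * e / 2 by apply: divr_gt0 => //; exact: mulr_gt0.
have [T1' hT1'] := heps _ ce0.
pose T1 := maxn T0 T1'.
pose Mk k := Num.max (u (T1 + k)%N - e / 2) 0.
pose S k := \sum_(T1 <= s < T1 + k) al s.
have S0 : forall k, 0 <= S k.
  move=> k; rewrite /S big_nat_cond; apply: sumr_ge0 => s /andP[/andP[hs _] _].
  apply: al0; apply: leq_trans hs; exact: leq_maxl.
have Mk0 : forall k, 0 <= Mk k by move=> k; rewrite /Mk le_max lexx orbT.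
have claim : forall k, Mk k * (1 + c * S k) <= Mk 0.
  elim=> [|k IH].
    by rewrite /S addn0 big_geq // mulr0 addr0 mulr1.
  have hk : (T0 <= T1 + k)%N by apply: leq_trans (leq_maxl _ _) (leq_addr _ _).
  have hk' : (T1' <= T1 + k)%N by apply: leq_trans (leq_maxr _ _) (leq_addr _ _).
  have eS : S k.+1 = S k + al (T1 + k)%N by rewrite /S addnS big_nat_recr //= leq_addr.
  have /andP[x0 x1] := hal _ hk.
  have a0 := al0 _ hk.
  have hr := hrec _ hk; have he := hT1' _ hk'.
  set a := al (T1 + k)%N in eS x0 x1 a0 hr he.
  set x := c * a in x0 x1.
  have hae : a * eps (T1 + k)%N <= a * (c * e / 2) by apply: ler_wpM2l.
  have hm : u (T1 + k.+1)%N - e / 2 <= (1 - x) * (u (T1 + k)%N - e / 2).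
    rewrite addnS; rewrite /x; lra.
  have hMk : u (T1 + k)%N - e / 2 <= Mk k by rewrite /Mk le_max lexx.
  have hM' : Mk k.+1 <= (1 - x) * Mk k.
    rewrite {1}/Mk ge_max; apply/andP; split.
      apply: (le_trans hm); apply: ler_wpM2l => //; lra.
    by apply: mulr_ge0; [lra | exact: Mk0].
  have hA : 0 <= 1 + c * S k + x.
    by apply: addr_ge0 => //; apply: addr_ge0 => //; apply: mulr_ge0; [exact: ltW | exact: S0].
  have t1 : Mk k.+1 * (1 + c * S k + x) <= (1 - x) * Mk k * (1 + c * S k + x).
    exact: ler_wpM2r.
  have t2 : 0 <= Mk k * (x * (c * S k) + x * x).
    apply: mulr_ge0 => //; apply: addr_ge0; apply: mulr_ge0 => //.
    by apply: mulr_ge0; [exact: ltW | exact: S0].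
  have e1 : (1 - x) * Mk k * (1 + c * S k + x) = Mk k * (1 + c * S k) - Mk k * (x * (c * S k) + x * x).
    by ring.
  have e2 : Mk k.+1 * (1 + c * S k.+1) = Mk k.+1 * (1 + c * S k + x).
    by rewrite eS /x; ring.
  rewrite e2; lra.
have [k0 hk0] := hdiv T1 (2 * Mk 0 / (c * e)).
exists (T1 + k0)%N => t ht.
have [k ek] : exists k, t = (T1 + k)%N by exists (t - T1)%N; rewrite subnKC // (leq_trans (leq_addr _ _) ht).
rewrite ek in ht *.
have kk : (k0 <= k)%N by move: ht; rewrite leq_add2l.
have Sk : S k0 <= S k.
  rewrite /S [X in _ <= X](big_cat_nat _ (n := (T1 + k0)%N)) ?leq_addr ?leq_add2l //=.
  rewrite lerDl; rewrite big_nat_cond; apply: sumr_ge0 => s /andP[/andP[hs _] _].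
  apply: al0; apply: leq_trans hs; apply: leq_trans (leq_maxl _ _) (leq_addr _ _).
have hMk : u (T1 + k)%N - e / 2 <= Mk k by rewrite /Mk le_max lexx.
suff : Mk k <= e / 2 by lra.
rewrite leNgt; apply/negP => hlt.
have ck := claim k.
have ce : 0 < c * e by exact: mulr_gt0.
have hS : 2 * Mk 0 <= S k * (c * e).
  by rewrite -ler_pdivrMr // (le_trans hk0).
have := S0 k; have := Mk0 0; nra.
Qed.

Lemma pow_small (p c : R) : 0 < p -> forall e, 0 < e ->
  exists T, forall t, (T <= t)%N -> c / ((t.+1)%:R `^ p) <= e.
Proof.
move=> p0 e e0.
have [c0|c0] := leP c 0.
  exists 0%N => t _; apply: (le_trans _ (ltW e0)).
  by rewrite pmulr_lle0 // invr_gt0 powR_gt0.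
pose X := (c / e) `^ p^-1.
exists (Num.Def.archi_bound X) => t ht.
have X0 : 0 <= X by exact: powR_ge0.
have hX : X <= (t.+1)%:R.
  apply: ltW; apply: (lt_le_trans (archi_boundP X0)).
  by rewrite ler_nat (leq_trans ht).
have hXp : X `^ p = c / e.
  rewrite /X -powRrM mulVf ?gt_eqF // powRr1 //.
  by apply: divr_ge0; apply: ltW.
have hle : c / e <= (t.+1)%:R `^ p.
  rewrite -hXp; apply: ge0_ler_powR => //; first exact: ltW.
  by rewrite nnegrE.
have tp : 0 < (t.+1)%:R `^ p by apply: powR_gt0.
rewrite ler_pdivrMr // -ler_pdivrMl //.
by rewrite mulrC.
Qed.

Lemma harm_div (a : R) (tau : R) : 0 < a -> tau <= 1 ->
  forall T (M : R), exists k, M <= \sum_(T <= s < T + k) (a / ((s.+1)%:R `^ tau)).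
Proof.
move=> a0 tau1 T M.
have hge : forall s : nat, a * harmonic s <= a / ((s.+1)%:R `^ tau).
  move=> s; rewrite /harmonic /=; apply: ler_wpM2l; first exact: ltW.
  have s0 : 0 < (s.+1)%:R :> R by [].
  rewrite lef_pV2 ?posrE ?powR_gt0 //.
  by rewrite -[X in _ <= X]powRr1 ?ler0n // ler_powR // ler1n.
case: (pselect (exists k, M <= \sum_(T <= s < T + k) (a / ((s.+1)%:R `^ tau)))) => // hn.
exfalso.
have hk : forall k, \sum_(T <= s < T + k) (a / ((s.+1)%:R `^ tau)) < M.
  move=> k; rewrite ltNge; apply/negP => h; apply: hn; exists k; exact: h.
have hs : forall k, a * \sum_(T <= s < T + k) harmonic s < M.
  move=> k; rewrite mulr_sumr; apply: le_lt_trans (hk k); apply: ler_sum => s _; exact: hge.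
apply: (@dvg_harmonic R).
apply: nondecreasing_is_cvgn.
  by apply: nondecreasing_series => n _ _; exact: harmonic_ge0.
exists (series harmonic T + M / a) => _ [n _ <-].
have ndec := @nondecreasing_series R harmonic xpredT 0%N (fun n _ _ => harmonic_ge0 n).
have Ma : 0 <= M / a.
  by apply: divr_ge0; [apply: ltW; apply: le_lt_trans (hs 0%N); rewrite big_geq ?addn0 // mulr0 | exact: ltW].
have [nT|Tn] := leqP n T.
  apply: (le_trans (ndec _ _ nT)); rewrite lerDl //.
have [k ->] : exists k, n = (T + k)%N by exists (n - T)%N; rewrite subnKC // ltnW.
rewrite /series /= (big_cat_nat _ (n := T)) ?leq_addr //= lerD2l.
rewrite ler_pdivlMr // mulrC; exact: ltW.
Qed.

End Seq.

Section Prob.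
Variables (d : measure_display) (T : measurableType d) (R : realType).
Variable P : probability T R.

Definition Int (f : T -> R) := P.-integrable setT (EFin \o f).
Definition Ex (f : T -> R) : R := fine (\int[P]_w (f w)%:E)%E.

Lemma Int_meas f : Int f -> measurable_fun setT f.
Proof. by move=> /measurable_int /measurable_EFinP. Qed.

Lemma IntD f g : Int f -> Int g -> Int (fun w => f w + g w).
Proof.
move=> hf hg; have := integrableD measurableT hf hg.
by apply: eq_integrable => // w _ /=; rewrite EFinD.
Qed.

Lemma IntZ c f : Int f -> Int (fun w => c * f w).
Proof.
move=> hf; have := integrableZl measurableT c hf.
by apply: eq_integrable => // w _ /=; rewrite EFinM.
Qed.

Lemma IntN f : Int f -> Int (fun w => - f w).
Proof.
move=> hf; have := IntZ (-1) hf.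
by apply: eq_integrable => // w _ /=; rewrite mulN1r.
Qed.

Lemma IntB f g : Int f -> Int g -> Int (fun w => f w - g w).
Proof. by move=> hf hg; apply: IntD => //; exact: IntN. Qed.

Lemma Intc c : Int (fun _ => c).
Proof. exact: finite_measure_integrable_cst. Qed.

Lemma Int_sum (I : finType) (Q : pred I) (F : I -> T -> R) :
  (forall i, Int (F i)) -> Int (fun w => \sum_(i | Q i) F i w).
Proof.
move=> hF; have := @integrable_sum _ _ _ P setT measurableT I (index_enum I) Q (fun i => EFin \o F i) (fun i _ => hF i).
by apply: eq_integrable => // w _ /=; rewrite sumEFin.
Qed.

Lemma Int_if (b : T -> bool) f g : measurable_fun setT b -> Int f -> Int g ->
  Int (fun w => if b w then f w else g w).
Proof.
move=> mb hf hg.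
have hfg := integrableD measurableT (integrable_abse hf) (integrable_abse hg).
apply: le_integrable hfg => //.
  apply/measurable_EFinP; apply: measurable_fun_ifT => //; exact: Int_meas.
move=> w _ /=; case: (b w).
  by rewrite lee_fin [X in _ <= X]ger0_norm ?addr_ge0 // lerDl.
by rewrite lee_fin [X in _ <= X]ger0_norm ?addr_ge0 // lerDr.
Qed.

Lemma ExD f g : Int f -> Int g -> Ex (fun w => f w + g w) = Ex f + Ex g.
Proof.
move=> hf hg; rewrite /Ex.
have -> : (\int[P]_w ((f w + g w)%:E) = \int[P]_w ((EFin \o f) \+ (EFin \o g)) w)%E.
  by apply: eq_integral => w _.
rewrite integralD_EFin //= fineD //; exact: integrable_fin_num.
Qed.

Lemma ExZ c f : Int f -> Ex (fun w => c * f w) = c * Ex f.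
Proof.
move=> hf; rewrite /Ex.
have -> : (\int[P]_w ((c * f w)%:E) = \int[P]_w (c%:E * (EFin \o f) w))%E.
  by apply: eq_integral => w _.
by rewrite integralZl // fineM //; exact: integrable_fin_num.
Qed.

Lemma ExN f : Int f -> Ex (fun w => - f w) = - Ex f.
Proof.
move=> hf; rewrite -mulN1r -ExZ //; congr Ex; apply/funext => w; by rewrite mulN1r.
Qed.

Lemma ExB f g : Int f -> Int g -> Ex (fun w => f w - g w) = Ex f - Ex g.
Proof. by move=> hf hg; rewrite ExD ?ExN //; exact: IntN. Qed.

Lemma Exc c : Ex (fun _ => c) = c.
Proof.
by rewrite /Ex integral_cst //= probability_setT mule1.
Qed.

Lemma Ex_sum (I : finType) (Q : pred I) (F : I -> T -> R) :
  (forall i, Int (F i)) -> Ex (fun w => \sum_(i | Q i) F i w) = \sum_(i | Q i) Ex (F i).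
Proof.
move=> hF; rewrite /Ex.
have -> : (\int[P]_w ((\sum_(i | Q i) F i w)%:E) = \int[P]_w (\sum_(i <- index_enum I | Q i) (EFin \o F i) w))%E.
  by apply: eq_integral => w _; rewrite sumEFin.
rewrite integral_sum //.
rewrite (eq_bigr (fun i => (fine (\int[P]_w (F i w)%:E))%:E)%E); last first.
  move=> i _; rewrite fineK //; apply: integrable_fin_num => //; exact: hF.
by rewrite sumEFin.
Qed.


Lemma Ex_le f c : Int f -> (forall w, f w <= c) -> Ex f <= c.
Proof.
move=> hf hc; rewrite /Ex -lee_fin fineK; last exact: integrable_fin_num.
apply: (le_trans (le_integral measurableT hf (Intc c) _)).
  by move=> w _ /=; rewrite lee_fin.
by rewrite integral_cst //= probability_setT mule1.
Qed.

Lemma Ex_abs_le f c : Int f -> (forall w, `|f w| <= c) -> `|Ex f| <= c.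
Proof.
move=> hf hc; rewrite ler_norml; apply/andP; split.
  rewrite lerNl -ExN //; apply: Ex_le; first exact: IntN.
  by move=> w; have := hc w; rewrite ler_norml => /andP[h _]; rewrite lerNl.
by apply: Ex_le => // w; have := hc w; rewrite ler_norml => /andP[_ h].
Qed.

Definition IntV p (F : T -> 'cV[R]_p) := forall k, Int (fun w => F w k 0).
Definition ExV p (F : T -> 'cV[R]_p) : 'cV[R]_p := \col_k Ex (fun w => F w k 0).

Lemma IntV_D p (F G : T -> 'cV[R]_p) : IntV F -> IntV G -> IntV (fun w => F w + G w).
Proof.
move=> hF hG k; have -> : (fun w => (F w + G w) k 0) = (fun w => F w k 0 + G w k 0).
  by apply/funext => w; rewrite mxE.
exact: IntD.
Qed.

Lemma IntV_N p (F : T -> 'cV[R]_p) : IntV F -> IntV (fun w => - F w).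
Proof.
move=> hF k; have -> : (fun w => (- F w) k 0) = (fun w => - F w k 0).
  by apply/funext => w; rewrite mxE.
exact: IntN.
Qed.

Lemma IntV_B p (F G : T -> 'cV[R]_p) : IntV F -> IntV G -> IntV (fun w => F w - G w).
Proof. by move=> hF hG; apply: IntV_D => //; exact: IntV_N. Qed.

Lemma IntV_Z p c (F : T -> 'cV[R]_p) : IntV F -> IntV (fun w => c *: F w).
Proof.
move=> hF k; have -> : (fun w => (c *: F w) k 0) = (fun w => c * F w k 0).
  by apply/funext => w; rewrite mxE.
exact: IntZ.
Qed.

Lemma IntV_M p q (M : 'M[R]_(q, p)) (F : T -> 'cV[R]_p) : IntV F -> IntV (fun w => M *m F w).
Proof.
move=> hF k; have -> : (fun w => (M *m F w) k 0) = (fun w => \sum_l M k l * F w l 0).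
  by apply/funext => w; rewrite mxE.
by apply: Int_sum => l; exact: IntZ.
Qed.

Lemma IntV_sum p (I : finType) (Q : pred I) (F : I -> T -> 'cV[R]_p) :
  (forall i, IntV (F i)) -> IntV (fun w => \sum_(i | Q i) F i w).
Proof.
move=> hF k; have -> : (fun w => (\sum_(i | Q i) F i w) k 0) = (fun w => \sum_(i | Q i) F i w k 0).
  by apply/funext => w; rewrite summxE.
by apply: Int_sum => i; exact: hF.
Qed.

Lemma IntV_c p (u : 'cV[R]_p) : IntV (fun _ => u).
Proof. by move=> k; exact: Intc. Qed.

Lemma IntV_if p (b : T -> bool) (F G : T -> 'cV[R]_p) : measurable_fun setT b ->
  IntV F -> IntV G -> IntV (fun w => if b w then F w else G w).
Proof.
move=> mb hF hG k; have -> : (fun w => (if b w then F w else G w) k 0) =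
   (fun w => if b w then F w k 0 else G w k 0).
  by apply/funext => w; case: (b w).
exact: Int_if.
Qed.

Lemma ExV_D p (F G : T -> 'cV[R]_p) : IntV F -> IntV G ->
  ExV (fun w => F w + G w) = ExV F + ExV G.
Proof.
move=> hF hG; apply/matrixP => k j; rewrite !mxE -ExD //.
by congr Ex; apply/funext => w; rewrite mxE.
Qed.

Lemma ExV_N p (F : T -> 'cV[R]_p) : IntV F -> ExV (fun w => - F w) = - ExV F.
Proof.
move=> hF; apply/matrixP => k j; rewrite !mxE -ExN //.
by congr Ex; apply/funext => w; rewrite mxE.
Qed.

Lemma ExV_B p (F G : T -> 'cV[R]_p) : IntV F -> IntV G ->
  ExV (fun w => F w - G w) = ExV F - ExV G.
Proof. by move=> hF hG; rewrite ExV_D ?ExV_N //; exact: IntV_N. Qed.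

Lemma ExV_Z p c (F : T -> 'cV[R]_p) : IntV F -> ExV (fun w => c *: F w) = c *: ExV F.
Proof.
move=> hF; apply/matrixP => k j; rewrite !mxE -ExZ //.
by congr Ex; apply/funext => w; rewrite mxE.
Qed.

Lemma ExV_M p q (M : 'M[R]_(q, p)) (F : T -> 'cV[R]_p) : IntV F ->
  ExV (fun w => M *m F w) = M *m ExV F.
Proof.
move=> hF; apply/matrixP => k j; rewrite !mxE.
have -> : (fun w => (M *m F w) k 0) = (fun w => \sum_l M k l * F w l 0).
  by apply/funext => w; rewrite mxE.
rewrite Ex_sum; last by move=> l; exact: IntZ.
by apply: eq_bigr => l _; rewrite ExZ // mxE.
Qed.

Lemma ExV_sum p (I : finType) (Q : pred I) (F : I -> T -> 'cV[R]_p) :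
  (forall i, IntV (F i)) -> ExV (fun w => \sum_(i | Q i) F i w) = \sum_(i | Q i) ExV (F i).
Proof.
move=> hF; apply/matrixP => k j; rewrite summxE !mxE.
have -> : (fun w => (\sum_(i | Q i) F i w) k 0) = (fun w => \sum_(i | Q i) F i w k 0).
  by apply/funext => w; rewrite summxE.
rewrite Ex_sum; last by move=> i; exact: hF.
by apply: eq_bigr => i _; rewrite mxE.
Qed.

Lemma ExV_c p (u : 'cV[R]_p) : ExV (fun _ => u) = u.
Proof. by apply/matrixP => k j; rewrite !mxE Exc ord1. Qed.

End Prob.

Section Est.
Variables (R : realType) (N n : nat) (m : 'I_N -> nat).
Variable H : forall i : 'I_N, 'M[R]_(m i, n).
Variables (adj : rel 'I_N) (rho : 'I_N -> R) (al be : nat -> R) (theta : 'cV[R]_n).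
Variable x0 : 'I_N -> 'cV[R]_n.
Variable v : nat -> forall i : 'I_N, 'cV[R]_(m i).

Notation est := (et_est H adj rho al be theta x0 v).

Lemma est_S1 s i : (est s.+1).1 i =
  (est s).1 i + al s *: ((H i)^T *m ((H i *m theta + v s i) - H i *m (est s).1 i))
  + be s *: \sum_(j < N | adj i j) ((est s).2 j - (est s).1 i).
Proof. by rewrite /=; case: (et_est _ _ _ _ _ _ _ _ s). Qed.

Lemma est_S2 s i : (est s.+1).2 i =
  if 1 / ((s.+2)%:R `^ rho i) < enorm ((est s.+1).1 i - (est s).2 i)
  then (est s.+1).1 i else (est s).2 i.
Proof. by rewrite /=; case: (et_est _ _ _ _ _ _ _ _ s). Qed.

Lemma est_0 : est 0 = (x0, x0). Proof. by []. Qed.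

Lemma enorm_ge0 p (u : 'cV[R]_p) : 0 <= enorm u.
Proof. exact: sqrtr_ge0. Qed.

Lemma enormN p (u : 'cV[R]_p) : enorm (- u) = enorm u.
Proof. by rewrite /enorm; congr Num.sqrt; apply: eq_bigr => k _; rewrite mxE sqrrN. Qed.

Lemma enorm_comp p (u : 'cV[R]_p) k : `|u k 0| <= enorm u.
Proof.
rewrite /enorm -sqrtr_sqr ler_sqrt; last by apply: sumr_ge0 => l _; exact: sqr_ge0.
by rewrite (bigD1 k) //= lerDl; apply: sumr_ge0 => l _; exact: sqr_ge0.
Qed.

Lemma trig_bound t i :
  enorm ((est t).2 i - (est t).1 i) <= 1 / ((t.+1)%:R `^ rho i).
Proof.
have thr0 : forall t, 0 <= 1 / ((t.+1)%:R `^ rho i).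
  by move=> u; apply: divr_ge0 => //; exact: powR_ge0.
case: t => [|s].
  rewrite est_0 /= subrr; apply: (le_trans _ (thr0 0%N)).
  have -> : enorm (0 : 'cV[R]_n) = 0.
    by rewrite /enorm big1 ?sqrtr0 // => k _; rewrite mxE expr0n.
  by [].
rewrite (est_S2 s i); case: ifPn => h.
  rewrite subrr; apply: (le_trans _ (thr0 s.+1)).
  have -> : enorm (0 : 'cV[R]_n) = 0.
    by rewrite /enorm big1 ?sqrtr0 // => k _; rewrite mxE expr0n.
  by [].
by rewrite -opprB enormN leNgt.
Qed.

End Est.


Section Det.
Variables (R : realType) (N n : nat) (m : 'I_N -> nat).
Variable H : forall i : 'I_N, 'M[R]_(m i, n).
Variable adj : rel 'I_N.
Hypothesis adj_sym : forall i j, adj i j = adj j i.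
Hypothesis conn : forall i j, connect adj i j.
Hypothesis rk : \rank ((\sum_(i < N) (H i)^T *m H i)%R) = n.
Variables (rho : 'I_N -> R) (a b tau1 tau2 : R).
Hypotheses (ha : 0 < a) (hb : 0 < b) (ht2 : 0 < tau2) (ht21 : tau2 <= tau1) (ht1 : tau1 <= 1).
Hypothesis hrho : forall j, tau1 - tau2 < rho j.

Let al := step_size a tau1.
Let be := step_size b tau2.
Let thr j (s : nat) : R := 1 / ((s.+1)%:R `^ rho j).
Let r j (s : nat) : R := (b / a) / ((s.+1)%:R `^ (tau2 + rho j - tau1)).

Lemma xpos (s : nat) p : 0 < (s.+1)%:R `^ p :> R.
Proof. exact: powR_gt0. Qed.

Lemma al_gt0 s : 0 < al s.
Proof. by rewrite /al /step_size divr_gt0 // xpos. Qed.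
Lemma be_gt0 s : 0 < be s.
Proof. by rewrite /be /step_size divr_gt0 // xpos. Qed.

Lemma be_al s : b / a * al s <= be s.
Proof.
rewrite /al /be /step_size mulrA divfK ?gt_eqF //.
rewrite ler_pdivlMr ?xpos // mulrAC ler_pdivrMr ?xpos // ler_pM2l //.
apply: ler_powR => //; by rewrite ler1n.
Qed.

Lemma be_thr j s : be s * thr j s = al s * r j s.
Proof.
rewrite /be /al /thr /r /step_size.
set x := (s.+1)%:R : R.
have x0 : x != 0 by rewrite pnatr_eq0.
have e1 : x `^ tau1 * x `^ (tau2 + rho j - tau1) = x `^ tau2 * x `^ rho j.
  rewrite -powRD ?x0 ?implybT // -powRD ?x0 ?implybT //; congr (_ `^ _); ring.
have p1 := xpos s tau1; have p2 := xpos s tau2; have p3 := xpos s (rho j).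
have p4 := xpos s (tau2 + rho j - tau1).
rewrite -/x in p1 p2 p3 p4.
have -> : b / x `^ tau2 * (1 / x `^ rho j) = b / (x `^ tau2 * x `^ rho j).
  by rewrite mul1r invfM mulrA.
rewrite -e1; field.
by rewrite !gt_eqF.
Qed.


Lemma r_ge0 j s : 0 <= r j s.
Proof. by rewrite /r; apply: divr_ge0; [apply: divr_ge0; apply: ltW | apply: powR_ge0]. Qed.

Lemma det_conv (z del : nat -> 'I_N -> 'cV[R]_n) :
  (forall s i, z s.+1 i = z s i - al s *: Az H (z s) i - be s *: Lz adj (z s) i
                          + be s *: \sum_(j | adj i j) del s j) ->
  (forall s j k, `|del s j k 0| <= thr j s) ->
  forall e, 0 < e -> exists T, forall t, (T <= t)%N -> W (z t) <= e.
Proof.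
move=> hrec hdel.
have c0 : 0 < b / a / 2 by apply: divr_gt0 => //; apply: divr_gt0.
have [lam lam0 hlam] := pos_lemma adj_sym conn rk c0.
have CA0 := CA_ge0 H.
have t10 : 0 < tau1 by apply: lt_le_trans ht21.
have CA1 : 0 < CA H + 1 by lra.
have N0 : 0 <= N%:R :> R by [].
have N1 : 0 < N%:R + 1 :> R by lra.
have q1 : 0 < 1 / (2 * (CA H + 1)) by apply: divr_gt0 => //; lra.
have q2 : 0 < 1 / (4 * (N%:R + 1)) :> R by apply: divr_gt0 => //; lra.
have q3 : 0 < 1 / lam by apply: divr_gt0.
have [T1 hT1] := pow_small a t10 q1.
have [T2 hT2] := pow_small b ht2 q2.
have [T3 hT3] := pow_small a t10 q3.
pose T0 := maxn T1 (maxn T2 T3).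
have hA1 : forall s, (T0 <= s)%N -> al s * CA H <= 1 / 2.
  move=> s hs; have := hT1 s (leq_trans (leq_maxl _ _) hs).
  rewrite -/(step_size a tau1 s) -/(al s) => h.
  have := al_gt0 s => a0.
  have : al s * (2 * (CA H + 1)) <= 1 by rewrite -ler_pdivlMr; [exact: h | lra].
  nra.
have hB1 : forall s, (T0 <= s)%N -> be s * N%:R <= 1 / 4.
  move=> s hs; have := hT2 s (leq_trans (leq_maxl _ _) (leq_trans (leq_maxr _ _) hs)).
  rewrite -/(step_size b tau2 s) -/(be s) => h.
  have := be_gt0 s => b0.
  have : be s * (4 * (N%:R + 1)) <= 1 by rewrite -ler_pdivlMr; [exact: h | lra].
  nra.
have hL1 : forall s, (T0 <= s)%N -> al s * lam <= 1.
  move=> s hs; have := hT3 s (leq_trans (leq_maxr _ _) (leq_trans (leq_maxr _ _) hs)).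
  rewrite -/(step_size a tau1 s) -/(al s) => h.
  by rewrite -ler_pdivlMr.
pose K1 := 3 * (N%:R ^+ 2 * n%:R) / lam.
have K10 : 0 <= K1 by rewrite /K1; apply: divr_ge0; [apply: mulr_ge0 => //; apply: mulr_ge0 | exact: ltW].
pose eps s := K1 * \sum_(j < N) r j s ^+ 2.
have step : forall s, (T0 <= s)%N ->
    W (z s.+1) <= (1 - lam / 2 * al s) * W (z s) + al s * eps s.
  move=> s hs.
  have A0 := al_gt0 s; have B0 := be_gt0 s.
  set A := al s in A0 *; set B := be s in B0 *.
  pose y := fun i => z s i - A *: Az H (z s) i - B *: Lz adj (z s) i.
  pose D := fun i => \sum_(j | adj i j) del s j.
  have hz : W (z s.+1) = W (fun i => y i + B *: D i).
    by rewrite /W; apply: eq_bigr => i _; rewrite hrec.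
  have h3 : 2 * (b / a / 2) * A <= B.
    have := be_al s; have -> : 2 * (b / a / 2) = b / a by rewrite mulrC divfK // pnatr_eq0.
    done.
  have hy := step_ineq adj_sym (z s) hlam (ltW c0) (ltW A0) (ltW B0) (hA1 s hs) (hB1 s hs) h3.
  rewrite -/y in hy.
  pose eta := A * lam / 2.
  have eta0 : 0 < eta by rewrite /eta; apply: divr_gt0 => //; exact: mulr_gt0.
  have hsp : W (fun i => y i + B *: D i) <= (1 + eta) * W y + (1 + eta^-1) * (B ^+ 2 * W D).
    rewrite /W; apply: (@le_trans _ _ (\sum_i ((1 + eta) * ip (y i) (y i) + (1 + eta^-1) * (B ^+ 2 * ip (D i) (D i))))); last first.
      by rewrite big_split /= -!mulr_sumr.
    apply: ler_sum => i _; apply: (le_trans (ip_add_le _ _ eta0)).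
    by rewrite ipZl ipZr mulrA -expr2.
  have hdel2 : forall j, ip (del s j) (del s j) <= n%:R * thr j s ^+ 2.
    move=> j; rewrite /ip.
    apply: (@le_trans _ _ (\sum_(k < n) thr j s ^+ 2)); last by rewrite sumr_const card_ord mulr_natl.
    apply: ler_sum => k _; rewrite -expr2 -(real_normK (num_real (del s j k 0))).
    have h := hdel s j k; have n0 := normr_ge0 (del s j k 0); nra.
  have hD : W D <= N%:R ^+ 2 * n%:R * \sum_(j < N) thr j s ^+ 2.
    rewrite /W.
    apply: (@le_trans _ _ (\sum_(i < N) N%:R * \sum_(j < N) ip (del s j) (del s j))).
      apply: ler_sum => i _; apply: (le_trans (ip_sum_le _ _)); rewrite card_ord.
      apply: ler_wpM2l => //.
      rewrite [X in _ <= X](bigID (adj i)) /= lerDl; apply: sumr_ge0 => j _; exact: ip_ge0.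
    rewrite sumr_const card_ord -[(N%:R * _) *+ N]mulr_natl.
    have hS : \sum_(j < N) ip (del s j) (del s j) <= n%:R * \sum_(j < N) thr j s ^+ 2.
      by rewrite mulr_sumr; apply: ler_sum => j _; exact: hdel2.
    have h1 : N%:R * (N%:R * \sum_(j < N) ip (del s j) (del s j)) <=
              N%:R * (N%:R * (n%:R * \sum_(j < N) thr j s ^+ 2)).
      by apply: ler_wpM2l => //; apply: ler_wpM2l.
    apply: (le_trans h1).
    by rewrite le_eqVlt; apply/orP; left; apply/eqP; ring.
  have hBA : B ^+ 2 * \sum_(j < N) thr j s ^+ 2 = A ^+ 2 * \sum_(j < N) r j s ^+ 2.
    rewrite !mulr_sumr; apply: eq_bigr => j _.
    by rewrite -!exprMn be_thr.
  have WD0 : 0 <= W D by exact: W_ge0.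
  have Wy0 : 0 <= W y by exact: W_ge0.
  have Wz0 : 0 <= W (z s) by exact: W_ge0.
  have Sr0 : 0 <= \sum_(j < N) r j s ^+ 2 by apply: sumr_ge0 => j _; exact: sqr_ge0.
  have St0 : 0 <= \sum_(j < N) thr j s ^+ 2 by apply: sumr_ge0 => j _; exact: sqr_ge0.
  have hAl := hL1 s hs; rewrite -/A in hAl.
  have he1 : (1 + eta) * W y <= (1 - lam / 2 * A) * W (z s).
    apply: (le_trans (ler_wpM2l _ hy)); first by lra.
    rewrite mulrA; apply: ler_wpM2r => //; rewrite /eta.
    have : 0 <= (A * lam) * (A * lam) by apply: mulr_ge0; apply: mulr_ge0 => //; apply: ltW.
    lra.
  have einv : eta^-1 = 2 / (A * lam) by rewrite /eta invf_div.
  have hk : (1 + eta^-1) * A ^+ 2 <= A * (3 / lam).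
    rewrite einv.
    have e2 : (1 + 2 / (A * lam)) * A ^+ 2 = A ^+ 2 + A * (2 / lam).
      by field; rewrite !gt_eqF.
    have e3 : A ^+ 2 = A * (A * lam) / lam by field; rewrite gt_eqF.
    rewrite e2 e3.
    have : A * (A * lam) / lam <= A * 1 / lam.
      rewrite ler_pdivrMr // divfK ?gt_eqF //; apply: ler_wpM2l; [exact: ltW | exact: hAl].
    have -> : A * (3 / lam) = A * 1 / lam + A * (2 / lam) by field; rewrite gt_eqF.
    lra.
  have he2 : (1 + eta^-1) * (B ^+ 2 * W D) <= A * eps s.
    apply: (@le_trans _ _ ((1 + eta^-1) * (B ^+ 2 * (N%:R ^+ 2 * n%:R * \sum_(j < N) thr j s ^+ 2)))).
      apply: ler_wpM2l; first by apply: addr_ge0 => //; rewrite invr_ge0; exact: ltW.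
      by apply: ler_wpM2l => //; exact: sqr_ge0.
    have -> : B ^+ 2 * (N%:R ^+ 2 * n%:R * \sum_(j < N) thr j s ^+ 2) =
              N%:R ^+ 2 * n%:R * (B ^+ 2 * \sum_(j < N) thr j s ^+ 2) by ring.
    rewrite hBA /eps /K1.
    have -> : (1 + eta^-1) * (N%:R ^+ 2 * n%:R * (A ^+ 2 * \sum_(j < N) r j s ^+ 2)) =
              ((1 + eta^-1) * A ^+ 2) * (N%:R ^+ 2 * n%:R * \sum_(j < N) r j s ^+ 2) by ring.
    have -> : A * (3 * (N%:R ^+ 2 * n%:R) / lam * \sum_(j < N) r j s ^+ 2) =
              (A * (3 / lam)) * (N%:R ^+ 2 * n%:R * \sum_(j < N) r j s ^+ 2) by ring.
    apply: ler_wpM2r => //; apply: mulr_ge0 => //; apply: mulr_ge0 => //; exact: sqr_ge0.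
  rewrite hz; apply: (le_trans hsp); lra.
move=> e e0.
have l2 : 0 < lam / 2 by apply: divr_gt0.
apply: (@seq_conv R (fun t => W (z t)) al eps (lam / 2) T0 l2) => //.
- by move=> t; exact: W_ge0.
- move=> t ht; have := hL1 t ht; have := al_gt0 t => a0 h.
  apply/andP; split; first by apply: mulr_ge0; [exact: ltW | exact: ltW].
  lra.
- move=> e1 e10.
  pose q := e1 / ((K1 + 1) * (N%:R + 1)).
  have q0 : 0 < q by rewrite /q; apply: divr_gt0 => //; apply: mulr_gt0; lra.
  have mq0 : 0 < Num.min 1 q by rewrite lt_min ltr01 q0.
  have /choice [Tf hTf] : forall j : 'I_N, exists T, forall t, (T <= t)%N -> r j t <= Num.min 1 q.
    move=> j; have pj : 0 < tau2 + rho j - tau1 by have := hrho j; lra.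
    have [T hT] := pow_small (b / a) pj mq0.
    by exists T.
  exists (\max_(j < N) Tf j)%N => t ht.
  have hr : forall j, r j t ^+ 2 <= q.
    move=> j; have := hTf j t (leq_trans (leq_bigmax j) ht); rewrite le_min => /andP[h1 h2].
    have := r_ge0 j t; nra.
  have hs : \sum_(j < N) r j t ^+ 2 <= N%:R * q.
    apply: (@le_trans _ _ (\sum_(j < N) q)); first by apply: ler_sum => j _; exact: hr.
    by rewrite sumr_const card_ord mulr_natl.
  rewrite /eps; apply: (le_trans (ler_wpM2l K10 hs)).
  have e2 : K1 * (N%:R * q) = e1 * ((K1 * N%:R) / ((K1 + 1) * (N%:R + 1))).
    rewrite /q; field; apply/andP; split; rewrite gt_eqF //; lra.
  rewrite e2 -[X in _ <= X]mulr1; apply: ler_wpM2l; first exact: ltW.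
  rewrite ler_pdivrMr; last by apply: mulr_gt0; lra.
  rewrite mul1r; have : 0 <= K1 * N%:R by apply: mulr_ge0.
  nra.
- exact: harm_div.
Qed.
End Det.


Lemma enorm_meas (d : measure_display) (T : measurableType d) (R : realType)
  (P : probability T R) p (F : T -> 'cV[R]_p) :
  IntV P F -> measurable_fun setT (fun w => enorm (F w)).
Proof.
move=> hF; rewrite /enorm.
apply: (measurableT_comp (continuous_measurable_fun (@sqrt_continuous R))).
apply: measurable_sum => kk; apply: measurable_funX; exact: Int_meas (hF kk).
Qed.

Lemma vec_id (R : realType) p (m0 A D L t : 'cV[R]_p) :
  m0 + - A + (D - L) - t = m0 - t - A - L + D.
Proof. by apply/matrixP => ? ?; rewrite !mxE; ring. Qed.

Lemma noise_int (d : measure_display) (T : measurableType d) (R : realType)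
  (P : probability T R) (v : T -> R) (c : R) :
  measurable_fun setT v -> ('E_P[fun w => (v w * v w)%R] = c%:E)%E -> Int P v.
Proof.
move=> mv hc.
have hv2 : Int P (fun w => v w * v w).
  apply/integrableP; split; first by apply/measurable_EFinP; exact: measurable_funM.
  have -> : (\int[P]_x `|(EFin \o (fun w => (v w * v w)%R)) x| = \int[P]_w (((v w * v w)%R)%:E))%E.
    by apply: eq_integral => w _ /=; rewrite ger0_norm // -expr2 sqr_ge0.
  by move: hc; rewrite unlock => ->; exact: ltry.
have hd := IntD (Intc P 1) hv2.
apply: le_integrable hd => //; first by apply/measurable_EFinP.
move=> w _ /=; rewrite lee_fin [X in _ <= X]ger0_norm; last first.
  by apply: addr_ge0 => //; rewrite -expr2 sqr_ge0.
have := real_normK (num_real (v w)); have := normr_ge0 (v w); nra.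
Qed.

Theorem theorem2 (R : realType) (d : measure_display) (T : measurableType d)
  (P : probability T R) (N n : nat) (m : 'I_N -> nat)
  (H : forall i : 'I_N, 'M[R]_(m i, n)) (adj : rel 'I_N)
  (theta : 'cV[R]_n) (x0 : 'I_N -> 'cV[R]_n)
  (V : nat -> T -> forall i : 'I_N, 'cV[R]_(m i))
  (Rcov : forall i : 'I_N, 'M[R]_(m i))
  (rho : 'I_N -> R) (a b tau1 tau2 eps1 : R) :
  (* undirected graph without self-loops *)
  (forall i j, adj i j = adj j i) -> (forall i, ~~ adj i i) ->
  (* noise: measurable, i.i.d. over time, zero mean, covariance R_i *)
  (forall t i k, measurable_fun setT (fun w => V t w i k ord0)) ->
  mutually_independent_vecs P V ->
  identically_distributed_vecs P V ->
  (forall t i k, ('E_P[fun w => V t w i k ord0] = 0)%E) ->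
  (forall t i k l, ('E_P[fun w => (V t w i k ord0 * V t w i l ord0)%R] = (Rcov i k l)%:E)%E) ->
  (* threshold exponents *)
  (forall i, 0 < rho i) ->
  (* (i) connected graph *)
  (forall i j, connect adj i j) ->
  (* (ii) G full rank *)
  \rank ((\sum_(i < N) (H i)^T *m H i)%R) = n ->
  (* (iii) step sizes *)
  0 < a -> 0 < b -> 0 < tau2 -> tau2 <= tau1 -> tau1 <= 1 ->
  0 < eps1 ->
  (forall t, (\int[P]_w ((stacked_norm (V t w)) `^ (2 + eps1))%:E < +oo)%E) ->
  tau2 + 1 / (2 + eps1) < tau1 -> 1 / 2 < tau1 ->
  (* rho_0 = min_j rho_j > tau1 - tau2 *)
  (forall j, tau1 - tau2 < rho j) ->
  forall (i : 'I_N) (k : 'I_n),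
    let X := fun t w =>
      (et_est H adj rho (step_size a tau1) (step_size b tau2) theta x0
              (V ^~ w) t).1 i k ord0 in
    (forall t, P.-integrable setT (fun w => (X t w)%:E)) /\
    ('E_P[X t] @[t --> \oo] --> (theta k ord0)%:E)%E.
Proof.
move=> hsym _ hmeas _ _ hmean hcov _ hconn hrank ha hb ht2 ht21 ht1 _ _ _ _ hrho0 i k X.
pose al := step_size a tau1; pose be := step_size b tau2.
pose est w t := et_est H adj rho al be theta x0 (V ^~ w) t.
have hvI : forall s j, IntV P (fun w => V s w j).
  move=> s j kk; exact: (noise_int (hmeas s j kk) (hcov s j kk kk)).
have hv0 : forall s j, ExV P (fun w => V s w j) = 0.
  move=> s j; apply/matrixP => kk l; rewrite !mxE /Ex.
  by have := hmean s j kk; rewrite unlock => ->.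
have hI : forall t, (forall j, IntV P (fun w => (est w t).1 j)) /\
                    (forall j, IntV P (fun w => (est w t).2 j)).
  elim => [|s [IH1 IH2]].
    by split => j; exact: IntV_c.
  have I1 : forall j, IntV P (fun w => (est w s.+1).1 j).
    move=> j.
    have -> : (fun w => (est w s.+1).1 j) = (fun w => (est w s).1 j +
       al s *: ((H j)^T *m ((H j *m theta + V s w j) - H j *m (est w s).1 j)) +
       be s *: \sum_(j' < N | adj j j') ((est w s).2 j' - (est w s).1 j)).
      by apply/funext => w; rewrite /est est_S1.
    apply: IntV_D; first apply: IntV_D.
    - exact: IH1.
    - apply: IntV_Z; apply: IntV_M; apply: IntV_B; last by apply: IntV_M; exact: IH1.
      by apply: IntV_D; [exact: IntV_c | exact: hvI].
    - apply: IntV_Z.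
      apply: (@IntV_sum _ _ _ P _ _ (adj j) (fun j' w => (est w s).2 j' - (est w s).1 j)) => j'.
      by apply: IntV_B; [exact: IH2 | exact: IH1].
  split => // j.
  have -> : (fun w => (est w s.+1).2 j) = (fun w =>
     if 1 / ((s.+2)%:R `^ rho j) < enorm ((est w s.+1).1 j - (est w s).2 j)
     then (est w s.+1).1 j else (est w s).2 j).
    by apply/funext => w; rewrite /est est_S2.
  apply: IntV_if; [|exact: I1|exact: IH2].
  apply: measurable_fun_ltr; first exact: measurable_cst.
  by apply: enorm_meas; apply: IntV_B; [exact: I1 | exact: IH2].
pose mu t j := ExV P (fun w => (est w t).1 j).
pose muh t j := ExV P (fun w => (est w t).2 j).
have hmu : forall s j, mu s.+1 j = mu s j +
    al s *: ((H j)^T *m ((H j *m theta + 0) - H j *m mu s j)) +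
    be s *: \sum_(j' < N | adj j j') (muh s j' - mu s j).
  move=> s j; have [IH1 IH2] := hI s; rewrite /mu /muh.
  have -> : (fun w => (est w s.+1).1 j) = (fun w => (est w s).1 j +
       al s *: ((H j)^T *m ((H j *m theta + V s w j) - H j *m (est w s).1 j)) +
       be s *: \sum_(j' < N | adj j j') ((est w s).2 j' - (est w s).1 j)).
    by apply/funext => w; rewrite /est est_S1.
  have i1 : IntV P (fun w => (H j *m theta + V s w j) - H j *m (est w s).1 j).
    apply: IntV_B; last by apply: IntV_M; exact: IH1.
    by apply: IntV_D; [exact: IntV_c | exact: hvI].
  have i2 : IntV P (fun w => \sum_(j' < N | adj j j') ((est w s).2 j' - (est w s).1 j)).
    apply: (@IntV_sum _ _ _ P _ _ (adj j) (fun j' w => (est w s).2 j' - (est w s).1 j)) => j'.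
    by apply: IntV_B; [exact: IH2 | exact: IH1].
  rewrite ExV_D; last by apply: IntV_Z.
    2: by apply: IntV_D; [exact: IH1 | apply: IntV_Z; exact: IntV_M].
  rewrite ExV_D //; last by apply: IntV_Z; exact: IntV_M.
  rewrite !ExV_Z //; last exact: IntV_M.
  rewrite ExV_M // ExV_B //; last by apply: IntV_M; exact: IH1.
    2: by apply: IntV_D; [exact: IntV_c | exact: hvI].
  rewrite ExV_D //; last exact: IntV_c.
  rewrite ExV_c hv0 ExV_M //.
  rewrite (@ExV_sum _ _ _ P _ _ (adj j) (fun j' w => (est w s).2 j' - (est w s).1 j)); last first.
    by move=> j'; apply: IntV_B; [exact: IH2 | exact: IH1].
  congr (_ + _ *: _); apply: eq_bigr => j' _; rewrite ExV_B //.
pose e t j := mu t j - theta.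
pose del t j := muh t j - mu t j.
have hrec : forall s j, e s.+1 j = e s j - al s *: Az H (e s) j - be s *: Lz adj (e s) j
                          + be s *: \sum_(j' | adj j j') del s j'.
  move=> s j; rewrite /e hmu /Az /Lz /del.
  have eH : H j *m theta + 0 - H j *m mu s j = - (H j *m (mu s j - theta)).
    by rewrite addr0 mulmxBr opprB.
  have eS : \sum_(j' < N | adj j j') (muh s j' - mu s j) =
      \sum_(j' | adj j j') (muh s j' - mu s j') -
      \sum_(j' | adj j j') ((mu s j - theta) - (mu s j' - theta)).
    by rewrite -sumrB; apply: eq_bigr => j' _; apply/matrixP => p q; rewrite !mxE; ring.
  by rewrite eH eS mulmxN scalerN scalerBr vec_id.
have hdel : forall s j kk, `|del s j kk 0| <= 1 / ((s.+1)%:R `^ rho j).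
  move=> s j kk; have [IH1 IH2] := hI s.
  rewrite /del /mu /muh -ExV_B ?IH1 ?IH2 // mxE.
  apply: Ex_abs_le; first by apply: IntV_B.
  move=> w; have h1 := enorm_comp ((est w s).2 j - (est w s).1 j) kk.
  apply: (le_trans h1); exact: trig_bound.
have hdet := det_conv hsym hconn hrank ha hb ht2 ht21 ht1 hrho0 hrec hdel.
have hE : forall t, ('E_P[X t] = (mu t i k 0)%:E)%E.
  move=> t; rewrite /mu mxE /Ex fineK; first by rewrite unlock.
  by apply: integrable_fin_num => //; exact: (hI t).1 i k.
split; first by move=> t; exact: ((hI t).1 i k).
apply: cvg_EFin; first by near=> t; rewrite hE.
have -> : fine \o (fun t => 'E_P[X t])%E = (fun t => mu t i k 0).
  by apply/funext => t /=; rewrite hE.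
apply/cvgrPdist_le => eps eps0.
have [T0 hT] := hdet (eps ^+ 2) (exprn_gt0 2 eps0).
exists T0 => // t /= ht.
have h1 : (e t i) k 0 ^+ 2 <= eps ^+ 2.
  apply: (le_trans (ip_comp_le _ _)); apply: (le_trans _ (hT t ht)).
  by apply: (@le_sum_term _ _ xpredT (fun j => ip (e t j) (e t j))) => // j _; exact: ip_ge0.
have -> : theta k ord0 - mu t i k 0 = - (e t i) k 0 by rewrite /e !mxE opprB.
rewrite normrN; have := real_normK (num_real ((e t i) k 0)); have := normr_ge0 ((e t i) k 0).
nra.
Unshelve. all: by end_near.
Qed.
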